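(* Let $m>n$, $1<p<\infty$, $Y^m=[0,1)^m$, and let $\mathbf{R}\in\mathbb{R}^{m\times n}$ satisfy $\mathbf{R}^*k\neq0$ for all $k\in\mathbb{Z}^m\setminus\{0\}$. Then $$\mathcal{G}^p_{\mathbf{R}}:=\{w\in L^p_\#(Y^m;\mathbb{R}^n):\ \hat w_k=\lambda_k\mathbf{R}^*k\ \text{for all } k\in\mathbb{Z}^m, \text{ for some } \{\lambda_k\}_{k\in\mathbb{Z}^m}\subset\mathbb{C}\text{ with }\lambda_0=0\}$$ is a closed linear subspace of $L^p_\#(Y^m;\mathbb{R}^n)$, where $\hat w_k:=\int_{Y^m}w(y)e^{-2\pi ik\cdot y}\,dy$.
   Context: $L^p_\#(Y^m;\mathbb{R}^n)$ denotes the $Y^m$-periodic functions in $L^p_{\rm loc}(\mathbb{R}^m;\mathbb{R}^n)$, with the $L^p(Y^m)$ norm; $\mathbf{R}^*$ is the transpose of $\mathbf{R}$. *)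

(* Defs.v *)
From HB Require Import structures.
From mathcomp Require Import all_boot all_order all_algebra.
From mathcomp Require Import all_classical all_reals all_analysis.
Set Implicit Arguments.
Unset Strict Implicit.
Unset Printing Implicit Defensive.
Import Order.TTheory GRing.Theory Num.Theory.
Import numFieldNormedType.Exports.
Local Open Scope classical_set_scope.
Local Open Scope ring_scope.

Section defs.
Variable R : realType.

Definition Ycell (m : nat) : set (m.-tuple R) :=
  [set y | forall i : 'I_m, 0 <= tnth y i < 1].

Definition box (m : nat) (a b : m.-tuple R) : set (m.-tuple R) :=
  [set y | forall i : 'I_m, tnth a i <= tnth y i < tnth b i].

(* mu is the Lebesgue measure on R^m: it gives boxes their volume
   (this characterizes Lebesgue measure on the Borel sets of R^m) *)
Definition is_lebesgue_measure (m : nat)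
  (mu : {measure set (m.-tuple R) -> \bar R}) : Prop :=
  forall a b : m.-tuple R, (forall i, tnth a i <= tnth b i) ->
    mu (box a b) = (\prod_(i < m) (tnth b i - tnth a i))%:E.

Definition shift1 (m : nat) (y : m.-tuple R) (i : 'I_m) : m.-tuple R :=
  [tuple tnth y j + (j == i)%:R | j < m].

Definition normv (n : nat) (v : 'rV[R]_n) : R :=
  Num.sqrt (\sum_(j < n) v ord0 j ^+ 2).

Definition periodic (m n : nat) (w : m.-tuple R -> 'rV[R]_n) : Prop :=
  forall y i, w (shift1 y i) = w y.

Definition Lp_per (m n : nat) (mu : {measure set (m.-tuple R) -> \bar R})
  (p : R) (w : m.-tuple R -> 'rV[R]_n) : Prop :=
  [/\ periodic w,
      (forall j : 'I_n, measurable_fun (@Ycell m) (fun y => w y ord0 j)) &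
      (\int[mu]_(y in @Ycell m) ((normv (w y)) `^ p)%:E < +oo)%E].

Definition Lp_dist_p (m n : nat) (mu : {measure set (m.-tuple R) -> \bar R})
  (p : R) (w v : m.-tuple R -> 'rV[R]_n) : \bar R :=
  (\int[mu]_(y in @Ycell m) ((normv (w y - v y)) `^ p)%:E)%E.

Definition kdot (m : nat) (k : 'rV[int]_m) (y : m.-tuple R) : R :=
  \sum_(i < m) (k ord0 i)%:~R * tnth y i.

(* real and imaginary parts of the Fourier coefficient
   hat w_k = int_{Y^m} w(y) e^{-2 pi i k.y} dy
           = int w cos(2 pi k.y) dy - i int w sin(2 pi k.y) dy *)
Definition fourier_re (m n : nat) (mu : {measure set (m.-tuple R) -> \bar R})
  (w : m.-tuple R -> 'rV[R]_n) (k : 'rV[int]_m) : 'rV[R]_n :=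
  \row_(j < n) Rintegral mu (@Ycell m)
     (fun y => w y ord0 j * cos (2 * pi * kdot k y)).

Definition fourier_im (m n : nat) (mu : {measure set (m.-tuple R) -> \bar R})
  (w : m.-tuple R -> 'rV[R]_n) (k : 'rV[int]_m) : 'rV[R]_n :=
  \row_(j < n) - Rintegral mu (@Ycell m)
     (fun y => w y ord0 j * sin (2 * pi * kdot k y)).

(* R^* k, written as the row vector k^T R *)
Definition Rstar_k (m n : nat) (Rm : 'M[R]_(m, n)) (k : 'rV[int]_m) : 'rV[R]_n :=
  (map_mx (fun z : int => z%:~R) k) *m Rm.

(* the set G^p_R; lambda_k = la k + i lb k *)
Definition G_R (m n : nat) (mu : {measure set (m.-tuple R) -> \bar R})
  (p : R) (Rm : 'M[R]_(m, n)) (w : m.-tuple R -> 'rV[R]_n) : Prop :=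
  Lp_per mu p w /\
  exists la lb : 'rV[int]_m -> R,
    [/\ la 0 = 0, lb 0 = 0 &
        forall k, fourier_re mu w k = la k *: Rstar_k Rm k /\
                  fourier_im mu w k = lb k *: Rstar_k Rm k].

Definition closed_linear_subspace (m n : nat)
  (mu : {measure set (m.-tuple R) -> \bar R}) (p : R)
  (G : (m.-tuple R -> 'rV[R]_n) -> Prop) : Prop :=
  [/\ (forall w, G w -> Lp_per mu p w),
      G (fun _ => 0),
      (forall w v, G w -> G v -> G (fun y => w y + v y)),
      (forall (c : R) w, G w -> G (fun y => c *: w y)) &
      (forall (ws : nat -> m.-tuple R -> 'rV[R]_n) w,
          (forall j, G (ws j)) -> Lp_per mu p w ->
          (fun j => Lp_dist_p mu p (ws j) w) @ \oo --> 0%E -> G w)].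

End defs.

(* Main.v *)
Require Import Defs.
From HB Require Import structures.
From mathcomp Require Import all_boot all_order all_algebra.
From mathcomp Require Import all_classical all_reals all_analysis.
From mathcomp Require Import measurable_realfun lebesgue_integral.
From mathcomp Require Import ring lra.
Import Order.TTheory GRing.Theory Num.Theory.
Import numFieldNormedType.Exports.
Local Open Scope classical_set_scope.
Local Open Scope ring_scope.


Section helpers.
Variable R : realType.
Variable m : nat.

Lemma mYcell : measurable (@Ycell R m).
Proof.
pose F (i : nat) : set (m.-tuple R) := if (insub i : option 'I_m) is Some j
  then (fun y : m.-tuple R => tnth y j) @^-1` `[0, 1[ else setT.
have -> : @Ycell R m = \bigcap_i F i.
  apply/seteqP; split => y /=.
    move=> H i _; rewrite /F; case: insubP => [j _ _|_ //].
    by rewrite /= in_itv /=; exact: H.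
  move=> H j; have := H (val j) I; rewrite /F valK /=.
  by rewrite in_itv.
apply: bigcapT_measurable => i; rewrite /F; case: insubP => [j _ _|_].
  have := @measurable_tnth _ R m j measurableT `[0, 1[%classic.
  by rewrite setTI; apply.
exact: measurableT.
Qed.

Lemma muYcell (mu : {measure set (m.-tuple R) -> \bar R}) :
  is_lebesgue_measure mu -> mu (@Ycell R m) = 1%E.
Proof.
move=> Hmu.
have -> : @Ycell R m = box [tuple (0:R) | _ < m] [tuple (1:R) | _ < m].
  by apply/seteqP; split => y /= H i; have := H i; rewrite !tnth_mktuple.
rewrite Hmu; last by move=> i; rewrite !tnth_mktuple ler01.
by rewrite big1 // => i _; rewrite !tnth_mktuple subr0.
Qed.

Lemma measurable_kdot (k : 'rV[int]_m) :
  measurable_fun setT (@kdot R m k).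
Proof.
rewrite /kdot; apply: measurable_sum => i.
apply: measurable_funM; first exact: measurable_cst.
exact: measurable_tnth.
Qed.

Lemma measurable_cosk (k : 'rV[int]_m) :
  measurable_fun setT (fun y => cos (2 * pi * @kdot R m k y)).
Proof.
apply: (measurableT_comp (f := cos)).
  exact: continuous_measurable_fun (@continuous_cos R).
apply: measurable_funM; first exact: measurable_cst.
exact: measurable_kdot.
Qed.

Lemma measurable_sink (k : 'rV[int]_m) :
  measurable_fun setT (fun y => sin (2 * pi * @kdot R m k y)).
Proof.
apply: (measurableT_comp (f := sin)).
  exact: continuous_measurable_fun (@continuous_sin R).
apply: measurable_funM; first exact: measurable_cst.
exact: measurable_kdot.
Qed.

End helpers.


Section normv.
Variable R : realType.
Variable n : nat.
Implicit Types a b v : 'rV[R]_n.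

Lemma sqr_le (x y : R) : 0 <= x -> 0 <= y -> x ^+ 2 <= y ^+ 2 -> x <= y.
Proof. by move=> hx hy; rewrite (@ler_pXn2r _ 2) // nnegrE. Qed.

Lemma sumsq_ge0 v : 0 <= \sum_(j < n) v ord0 j ^+ 2.
Proof. by apply: sumr_ge0 => j _; exact: sqr_ge0. Qed.

Lemma normv_ge0 v : 0 <= normv v.
Proof. exact: sqrtr_ge0. Qed.

Lemma normv_sqr v : normv v ^+ 2 = \sum_(j < n) v ord0 j ^+ 2.
Proof. by rewrite /normv sqr_sqrtr // sumsq_ge0. Qed.

Lemma normv_comp v j : `|v ord0 j| <= normv v.
Proof.
apply: sqr_le => //; first exact: normv_ge0.
rewrite normv_sqr real_normK ?num_real // (bigD1 j) //= lerDl.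
by apply: sumr_ge0 => i _; exact: sqr_ge0.
Qed.

Lemma normvZ (c : R) v : normv (c *: v) = `|c| * normv v.
Proof.
rewrite /normv -sqrtr_sqr -sqrtrM ?sqr_ge0 // mulr_sumr.
by congr Num.sqrt; apply: eq_bigr => j _; rewrite mxE exprMn.
Qed.

Lemma normvD a b : normv (a + b) <= 2 * Num.max (normv a) (normv b).
Proof.
set M := Num.max _ _.
have M0 : 0 <= M by rewrite le_max normv_ge0.
apply: sqr_le; [exact: normv_ge0|by rewrite mulr_ge0|].
rewrite normv_sqr (le_trans (y := \sum_(j < n) 2 * (a ord0 j ^+ 2 + b ord0 j ^+ 2))) //.
  apply: ler_sum => j _; rewrite mxE.
  rewrite -subr_ge0 (_ : _ - _ = (a ord0 j - b ord0 j) ^+ 2); first exact: sqr_ge0.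
  by ring.
rewrite -mulr_sumr big_split /= -!normv_sqr exprMn.
have ha : normv a ^+ 2 <= M ^+ 2.
  by rewrite ler_pXn2r ?nnegrE ?normv_ge0 // le_max lexx.
have hb : normv b ^+ 2 <= M ^+ 2.
  by rewrite ler_pXn2r ?nnegrE ?normv_ge0 // le_max lexx orbT.
have : normv a ^+ 2 + normv b ^+ 2 <= 2 * M ^+ 2 by rewrite mulr2n mulrDl mul1r lerD.
move=> h; rewrite (_ : 2 ^+ 2 = 2 * 2) ?expr2 //.
by rewrite -mulrA ler_pM2l // -expr2.
Qed.

End normv.


Section Lp.
Variable R : realType.
Variables m n : nat.
Variable mu : {measure set (m.-tuple R) -> \bar R}.
Variable p : R.
Hypothesis p1 : 1 < p.
Hypothesis Hmu : is_lebesgue_measure mu.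
Notation Y := (@Ycell R m).
Implicit Types u v w : m.-tuple R -> 'rV[R]_n.

Lemma mnormp u D : (forall j, measurable_fun D (fun y => u y ord0 j)) ->
  measurable_fun D (fun y => normv (u y) `^ p).
Proof.
move=> mu_.
apply: (measurableT_comp (f := fun x : R => x `^ p)); first exact: measurable_powR.
rewrite /normv.
have ms : measurable_fun [set: R] (@Num.sqrt R).
  exact: continuous_measurable_fun (@sqrt_continuous R).
apply: (measurableT_comp ms).
by apply: measurable_sum => j; apply: measurable_funX.
Qed.

Lemma mnormpE u D : (forall j, measurable_fun D (fun y => u y ord0 j)) ->
  measurable_fun D (fun y => (normv (u y) `^ p)%:E).
Proof. by move=> h; apply/measurable_EFinP; exact: mnormp. Qed.

Lemma Lp_bound u v w (K : R) : 0 <= K -> Defs.periodic u ->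
  (forall j, measurable_fun Y (fun y => u y ord0 j)) ->
  Lp_per mu p v -> Lp_per mu p w ->
  (forall y, Y y -> normv (u y) `^ p <= K * (normv (v y) `^ p + normv (w y) `^ p)) ->
  Lp_per mu p u.
Proof.
move=> K0 pu mu_ [_ mv iv] [_ mw iw] H; split; [exact: pu|exact: mu_|].
have mY := @mYcell R m.
have g0 : forall x, Y x -> (0 <= (normv (v x) `^ p)%:E)%E.
  by move=> y _; rewrite lee_fin powR_ge0.
have g0' : forall x, Y x -> (0 <= (normv (w x) `^ p)%:E)%E.
  by move=> y _; rewrite lee_fin powR_ge0.
have mv' := @mnormpE v Y mv; have mw' := @mnormpE w Y mw.
apply: (le_lt_trans (y := \int[mu]_(y in Y)
   (K%:E * ((normv (v y) `^ p)%:E + (normv (w y) `^ p)%:E)))%E).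
  apply: ge0_le_integral.
  - exact: mY.
  - by move=> y _; rewrite lee_fin powR_ge0.
  - exact: mnormpE.
  - apply: emeasurable_funM; first exact: measurable_cst.
    exact: emeasurable_funD.
  - by move=> y Yy; rewrite -EFinD -EFinM lee_fin H.
rewrite ge0_integralZl_EFin; last 4 first.
- exact: mY.
- by move=> y Yy; apply: adde_ge0; [exact: g0|exact: g0'].
- exact: emeasurable_funD.
- exact: K0.
rewrite ge0_integralD; last 5 first.
- exact: mY.
- exact: g0.
- exact: mv'.
- exact: g0'.
- exact: mw'.
have fv : (\int[mu]_(y in Y) (normv (v y) `^ p)%:E)%E \is a fin_num.
  by rewrite ge0_fin_numE ?iv // integral_ge0.
have fw : (\int[mu]_(y in Y) (normv (w y) `^ p)%:E)%E \is a fin_num.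
  by rewrite ge0_fin_numE ?iw // integral_ge0.
by rewrite -(fineK fv) -(fineK fw) -EFinD -EFinM ltry.
Qed.



Lemma Lp_add v w : Lp_per mu p v -> Lp_per mu p w ->
  Lp_per mu p (fun y => v y + w y).
Proof.
move=> hv hw; have [pv mv _] := hv; have [pw mw _] := hw.
apply: (@Lp_bound _ v w (2 `^ p)).
- exact: powR_ge0.
- by move=> y i /=; rewrite pv pw.
- move=> j; rewrite (_ : (fun y => _) = (fun y => v y ord0 j + w y ord0 j)).
    exact: measurable_funD.
  by apply/funext => y; rewrite mxE.
- exact: hv.
- exact: hw.
move=> y _.
have p0 : 0 <= p by apply: ltW; apply: lt_trans p1.
apply: (le_trans (y := (2 * Num.max (normv (v y)) (normv (w y))) `^ p)).
  apply: ge0_ler_powR => //; rewrite ?nnegrE ?normv_ge0 //.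
    by rewrite mulr_ge0 // le_max normv_ge0.
  exact: normvD.
rewrite powRM // ?le_max ?normv_ge0 // ler_wpM2l ?powR_ge0 //.
have [h|h] := leP (normv (v y)) (normv (w y)).
  by rewrite lerDr powR_ge0.
by rewrite lerDl powR_ge0.
Qed.

Lemma Lp_scale (c : R) w : Lp_per mu p w -> Lp_per mu p (fun y => c *: w y).
Proof.
move=> hw; have [pw mw _] := hw.
apply: (@Lp_bound _ w w (`|c| `^ p)).
- exact: powR_ge0.
- by move=> y i /=; rewrite pw.
- move=> j; rewrite (_ : (fun y => _) = (fun y => c * w y ord0 j)).
    by apply: measurable_funM => //; exact: measurable_cst.
  by apply/funext => y; rewrite mxE.
- exact: hw.
- exact: hw.
move=> y _; rewrite normvZ powRM ?normv_ge0 // ler_wpM2l ?powR_ge0 //.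
by rewrite lerDl powR_ge0.
Qed.

Lemma Lp_sub v w : Lp_per mu p v -> Lp_per mu p w ->
  Lp_per mu p (fun y => v y - w y).
Proof.
move=> hv hw.
have := @Lp_add v (fun y => (-1) *: w y) hv (@Lp_scale (-1) w hw).
by rewrite (_ : (fun y => _) = (fun y => v y - w y)) // ; apply/funext => y; rewrite scaleN1r.
Qed.

Lemma eps_bound (x e : R) : 0 <= x -> 0 < e ->
  x <= e + (e `^ (p - 1))^-1 * x `^ p.
Proof.
move=> x0 e0.
have c0 : 0 < e `^ (p - 1) by apply: powR_gt0.
have [hx|hx] := leP x e.
  by apply: (le_trans hx); rewrite lerDl mulr_ge0 ?invr_ge0 ?powR_ge0 // ltW.
apply: (le_trans (y := (e `^ (p - 1))^-1 * x `^ p)); last first.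
  by rewrite lerDr ltW.
have p0 : 0 < p by apply: lt_trans p1.
rewrite -(mulr_powRB1 x0 p0) mulrC ler_pdivlMr //.
rewrite ler_wpM2l //; apply: ge0_ler_powR; rewrite ?nnegrE ?ltW //.
  by rewrite subr_gt0.
exact: lt_trans e0 hx.
Qed.

End Lp.


Section est.
Variable R : realType.
Variables m n : nat.
Variable mu : {measure set (m.-tuple R) -> \bar R}.
Variable p : R.
Hypothesis p1 : 1 < p.
Hypothesis Hmu : is_lebesgue_measure mu.
Notation Y := (@Ycell R m).
Implicit Types u v w : m.-tuple R -> 'rV[R]_n.

Lemma int_bound u (f : m.-tuple R -> R) (e : R) :
  (forall j, measurable_fun Y (fun y => u y ord0 j)) ->
  measurable_fun Y f -> 0 < e ->
  (forall y, Y y -> `|f y| <= normv (u y)) ->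
  (\int[mu]_(y in Y) `|(f y)%:E| <=
     e%:E + ((e `^ (p - 1))^-1)%:E * \int[mu]_(y in Y) (normv (u y) `^ p)%:E)%E.
Proof.
move=> mu_ mf e0 hf.
have mY := @mYcell R m.
have c0 : 0 <= (e `^ (p - 1))^-1 by rewrite invr_ge0 powR_ge0.
have mN := @mnormpE R m n p u Y mu_.
have N0 : forall y, Y y -> (0 <= (normv (u y) `^ p)%:E)%E.
  by move=> y _; rewrite lee_fin powR_ge0.
apply: (le_trans (y := \int[mu]_(y in Y)
   (e%:E + ((e `^ (p - 1))^-1)%:E * (normv (u y) `^ p)%:E))%E).
  apply: ge0_le_integral.
  - exact: mY.
  - by move=> y _; exact: abse_ge0.
  - apply: measurableT_comp => //; exact/measurable_EFinP.
  - apply: emeasurable_funD; first exact: measurable_cst.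
    by apply: emeasurable_funM; first exact: measurable_cst.
  - move=> y Yy; rewrite abse_EFin -EFinM -EFinD lee_fin.
    apply: le_trans (hf y Yy) _.
    apply: eps_bound => //; exact: normv_ge0.
rewrite (@ge0_integralD _ _ _ mu Y mY (fun=> e%:E)
   (fun y => (((e `^ (p - 1))^-1)%:E * (normv (u y) `^ p)%:E)%E)); last 4 first.
- by move=> y _; rewrite lee_fin ltW.
- exact: measurable_cst.
- by move=> y Yy; apply: mule_ge0; [rewrite lee_fin|exact: N0].
- by apply: emeasurable_funM; first exact: measurable_cst.
have := integral_cst mu mY e%:E; rewrite /= => ->.
rewrite (@muYcell R m mu Hmu) mule1.
rewrite ge0_integralZl_EFin //.
Qed.

Lemma int_wg w (g : m.-tuple R -> R) j : Lp_per mu p w ->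
  measurable_fun setT g -> (forall y, `|g y| <= 1) ->
  mu.-integrable Y (EFin \o (fun y => w y ord0 j * g y)).
Proof.
move=> [_ mw iw] mg gb.
have mY := @mYcell R m.
have mf : measurable_fun Y (fun y => w y ord0 j * g y).
  by apply: measurable_funM; [exact: mw|exact: measurable_funTS].
apply/integrableP; split; first exact/measurable_EFinP.
have hpt : forall y, Y y -> `|w y ord0 j * g y| <= normv (w y).
  move=> y _; rewrite normrM.
  apply: (le_trans _ (@normv_comp R n (w y) j)).
  by rewrite ler_piMr // ?normr_ge0.
have hb := @int_bound w _ 1 mw mf ltr01 hpt.
apply: le_lt_trans hb _.
have fw : (\int[mu]_(y in Y) (normv (w y) `^ p)%:E)%E \is a fin_num.
  by rewrite ge0_fin_numE ?iw // integral_ge0 // => y _; rewrite lee_fin powR_ge0.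
by rewrite -(fineK fw) -EFinM -EFinD ltry.
Qed.


Lemma est w v (g : m.-tuple R -> R) j (e : R) :
  Lp_per mu p w -> Lp_per mu p v ->
  measurable_fun setT g -> (forall y, `|g y| <= 1) -> 0 < e ->
  (`|Rintegral mu Y (fun y => w y ord0 j * g y)
     - Rintegral mu Y (fun y => v y ord0 j * g y)|%:E <=
   e%:E + ((e `^ (p - 1))^-1)%:E * Lp_dist_p mu p w v)%E.
Proof.
move=> hw hv mg gb e0.
have mY := @mYcell R m.
have hwv := @Lp_sub R m n mu p p1 w v hw hv.
rewrite -RintegralB //; last 2 first.
- exact: int_wg.
- exact: int_wg.
rewrite (@eq_Rintegral _ _ _ mu Y (fun y => (w y - v y) ord0 j * g y)); last first.
  by move=> y _; rewrite !mxE mulrBl.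
rewrite EFin_normr_Rintegral //; last exact: (@int_wg (fun y => w y - v y)).
have [_ mwv _] := hwv.
have mf : measurable_fun Y (fun y => (w y - v y) ord0 j * g y).
  by apply: measurable_funM; [exact: mwv|exact: measurable_funTS].
apply: le_trans (le_abse_integral mu mY _) _.
  exact/measurable_EFinP.
apply: (@int_bound (fun y => w y - v y)) => //.
move=> y _; rewrite normrM.
apply: (le_trans _ (@normv_comp R n (w y - v y) j)).
by rewrite ler_piMr // ?normr_ge0.
Qed.

End est.

Section fourier.
Variable R : realType.
Variables m n : nat.
Variable mu : {measure set (m.-tuple R) -> \bar R}.
Variable p : R.
Hypothesis p1 : 1 < p.
Hypothesis Hmu : is_lebesgue_measure mu.
Notation Y := (@Ycell R m).
Implicit Types u v w : m.-tuple R -> 'rV[R]_n.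

Lemma cos_b (k : 'rV[int]_m) y : `|cos (2 * pi * kdot k y)| <= 1 :> R.
Proof. exact: cos_max. Qed.

Lemma sin_b (k : 'rV[int]_m) y : `|sin (2 * pi * kdot k y)| <= 1 :> R.
Proof. exact: sin_max. Qed.

Lemma fre_add v w k : Lp_per mu p v -> Lp_per mu p w ->
  fourier_re mu (fun y => v y + w y) k = fourier_re mu v k + fourier_re mu w k.
Proof.
move=> hv hw; apply/rowP => j; rewrite !mxE -RintegralD //; last 3 first.
- exact: mYcell.
- by apply: (@int_wg R m n mu p p1 Hmu) => //; [exact: measurable_cosk|exact: cos_b].
- by apply: (@int_wg R m n mu p p1 Hmu) => //; [exact: measurable_cosk|exact: cos_b].
by apply: eq_Rintegral => y _; rewrite mxE mulrDl.
Qed.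

Lemma fim_add v w k : Lp_per mu p v -> Lp_per mu p w ->
  fourier_im mu (fun y => v y + w y) k = fourier_im mu v k + fourier_im mu w k.
Proof.
move=> hv hw; apply/rowP => j; rewrite !mxE -opprD -RintegralD //; last 3 first.
- exact: mYcell.
- by apply: (@int_wg R m n mu p p1 Hmu) => //; [exact: measurable_sink|exact: sin_b].
- by apply: (@int_wg R m n mu p p1 Hmu) => //; [exact: measurable_sink|exact: sin_b].
by congr (- _); apply: eq_Rintegral => y _; rewrite mxE mulrDl.
Qed.

Lemma fre_scale (c : R) w k : Lp_per mu p w ->
  fourier_re mu (fun y => c *: w y) k = c *: fourier_re mu w k.
Proof.
move=> hw; apply/rowP => j; rewrite !mxE -RintegralZl //; last 2 first.
- exact: mYcell.
- by apply: (@int_wg R m n mu p p1 Hmu) => //; [exact: measurable_cosk|exact: cos_b].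
by apply: eq_Rintegral => y _; rewrite mxE mulrA.
Qed.

Lemma fim_scale (c : R) w k : Lp_per mu p w ->
  fourier_im mu (fun y => c *: w y) k = c *: fourier_im mu w k.
Proof.
move=> hw; apply/rowP => j; rewrite !mxE mulrN -RintegralZl //; last 2 first.
- exact: mYcell.
- by apply: (@int_wg R m n mu p p1 Hmu) => //; [exact: measurable_sink|exact: sin_b].
by congr (- _); apply: eq_Rintegral => y _; rewrite mxE mulrA.
Qed.

End fourier.


Section lim.
Variable R : realType.

Lemma uniqR (f : nat -> R) (a b : R) : f n @[n --> \oo] --> a -> f n @[n --> \oo] --> b -> a = b.
Proof.
by move=> ha hb; rewrite -(cvg_lim (@Rhausdorff R) ha) (cvg_lim (@Rhausdorff R) hb).
Qed.

Lemma line_limit n (x : nat -> R) (r F : 'rV[R]_n) :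
  (forall c, (fun j => x j * r ord0 c) @ \oo --> F ord0 c) ->
  exists lam : R, F = lam *: r /\ (r = 0 -> lam = 0).
Proof.
move=> H.
case: (boolP [exists c, r ord0 c != 0]).
  move/existsP => [c0 hc0].
  exists (F ord0 c0 / r ord0 c0); split; last first.
    by move=> r0; move: hc0; rewrite r0 mxE eqxx.
  have hx : x @ \oo --> F ord0 c0 / r ord0 c0.
    have -> : x = (fun j => x j * r ord0 c0 * (r ord0 c0)^-1).
      by apply/funext => j; rewrite -mulrA mulfV // mulr1.
    exact: cvgMl.
  apply/matrixP => i c; rewrite mxE.
  have -> : i = ord0 by apply/val_inj; case: i => [[|k] hk].
 
  apply: (@uniqR (fun j => x j * r ord0 c)); [exact: H | exact: cvgMl].
rewrite negb_exists => /forallP hr.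
have r0 : r = 0 by apply/rowP => c; rewrite mxE; have := hr c; rewrite negbK => /eqP.
exists 0; split => //; rewrite scale0r; apply/matrixP => i c; rewrite mxE.
  have -> : i = ord0 by apply/val_inj; case: i => [[|k] hk].
 
apply: (@uniqR _ _ _ (H c)).
rewrite (_ : (fun j => _) = (fun=> 0)); first exact: cvg_cst.
by apply/funext => j; rewrite r0 mxE mulr0.
Qed.

End lim.

Section conv.
Variable R : realType.
Variables m n : nat.
Variable mu : {measure set (m.-tuple R) -> \bar R}.
Variable p : R.
Hypothesis p1 : 1 < p.
Hypothesis Hmu : is_lebesgue_measure mu.
Notation Y := (@Ycell R m).

Lemma conv_fourier (ws : nat -> m.-tuple R -> 'rV[R]_n) w (g : m.-tuple R -> R) c :
  Lp_per mu p w -> (forall j, Lp_per mu p (ws j)) ->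
  measurable_fun setT g -> (forall y, `|g y| <= 1) ->
  (fun j => Lp_dist_p mu p (ws j) w) @ \oo --> 0%E ->
  (fun j => Rintegral mu Y (fun y => ws j y ord0 c * g y)) @ \oo -->
     Rintegral mu Y (fun y => w y ord0 c * g y).
Proof.
move=> hw hws mg gb /fine_cvgP [Hfin Hfc].
apply/cvgrPdist_lt => e e0.
have e20 : 0 < e / 2 by rewrite divr_gt0.
set C := ((e / 2) `^ (p - 1))^-1.
have C0 : 0 < C by rewrite invr_gt0 powR_gt0.
have d0 : 0 < e / 2 / C by rewrite divr_gt0.
have := (cvgrPdist_lt _ _).1 Hfc _ d0.
move=> Hd.
near=> j.
have f1 : Lp_dist_p mu p (ws j) w \is a fin_num by near: j; exact: Hfin.
have f2 : `|0 - fine (Lp_dist_p mu p (ws j) w)| < e / 2 / C by near: j; exact: Hd.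
have h := @est R m n mu p p1 Hmu (ws j) w g c (e / 2) (hws j) hw mg gb e20.
rewrite -(fineK f1) -EFinM -EFinD lee_fin in h.
rewrite distrC; apply: (le_lt_trans h).
rewrite [X in _ < X](splitr e) ltrD2l -/C.
rewrite -(ltr_pM2l C0) mulrCA mulfV ?gt_eqF // mulr1 in f2.
apply: le_lt_trans f2; rewrite ler_pM2l //.
by rewrite sub0r normrN ler_norm.
Unshelve. all: end_near.
Qed.

End conv.


Lemma Rstar0 (R : realType) m n (Rm : 'M[R]_(m, n)) : Rstar_k Rm 0 = 0.
Proof.
rewrite /Rstar_k (_ : map_mx _ 0 = 0) ?mul0mx //.
by apply/matrixP => i j; rewrite !mxE.
Qed.

Lemma normv0 (R : realType) n : normv (0 : 'rV[R]_n) = 0.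
Proof. by rewrite /normv big1 ?sqrtr0 // => j _; rewrite mxE expr0n. Qed.

Lemma fre_E (R : realType) m n (mu : {measure set (m.-tuple R) -> \bar R})
  (u : m.-tuple R -> 'rV[R]_n) k c :
  fourier_re mu u k ord0 c =
  Rintegral mu (@Ycell R m) (fun y => u y ord0 c * cos (2 * pi * kdot k y)).
Proof. by rewrite mxE. Qed.

Lemma fim_E (R : realType) m n (mu : {measure set (m.-tuple R) -> \bar R})
  (u : m.-tuple R -> 'rV[R]_n) k c :
  fourier_im mu u k ord0 c =
  - Rintegral mu (@Ycell R m) (fun y => u y ord0 c * sin (2 * pi * kdot k y)).
Proof. by rewrite mxE. Qed.

Theorem lemma5p3 (R : realType) (m n : nat)
  (mu : {measure set (m.-tuple R) -> \bar R}) (p : R) (Rm : 'M[R]_(m, n)) :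
  (n < m)%N -> 1 < p ->
  is_lebesgue_measure mu ->
  (forall k : 'rV[int]_m, k != 0 -> Rstar_k Rm k != 0) ->
  closed_linear_subspace mu p (G_R mu p Rm).
Proof.
move=> _ p1 Hmu _.
have p0 : p != 0 by rewrite gt_eqF // (lt_trans ltr01 p1).
split.
- by move=> w [].
- split.
    split.
    + by move=> y i.
    + move=> j; rewrite (_ : (fun y => _) = fun=> 0); first exact: measurable_cst.
      by apply/funext => y; rewrite mxE.
    + rewrite (_ : (fun y => _) = cst 0%E); first by rewrite integral0 ltry.
      by apply/funext => y; rewrite normv0 powR0.
  exists (fun=> 0), (fun=> 0); split => // k; rewrite !scale0r; split;
    apply/rowP => j; rewrite !mxE /Rintegral.
    by under eq_integral do rewrite ?mxE mul0r; rewrite integral0.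
  by under eq_integral do rewrite ?mxE mul0r; rewrite integral0 oppr0.
- move=> w v [hw [la1 [lb1 [a1 b1 H1]]]] [hv [la2 [lb2 [a2 b2 H2]]]].
  split; first exact: (@Lp_add R m n mu p p1 w v hw hv).
  exists (fun k => la1 k + la2 k), (fun k => lb1 k + lb2 k); split.
  + by rewrite a1 a2 addr0.
  + by rewrite b1 b2 addr0.
  move=> k; rewrite (@fre_add R m n mu p p1 Hmu w v k hw hv) (@fim_add R m n mu p p1 Hmu w v k hw hv).
  have [-> ->] := H1 k; have [-> ->] := H2 k.
  by rewrite !scalerDl.
- move=> c w [hw [la1 [lb1 [a1 b1 H1]]]].
  split; first exact: (@Lp_scale R m n mu p c w hw).
  exists (fun k => c * la1 k), (fun k => c * lb1 k); split.
  + by rewrite a1 mulr0.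
  + by rewrite b1 mulr0.
  move=> k; rewrite (@fre_scale R m n mu p p1 Hmu c w k hw) (@fim_scale R m n mu p p1 Hmu c w k hw).
  have [-> ->] := H1 k.
  by rewrite !scalerA.
move=> ws w Hws hw Hd.
have hws j : Lp_per mu p (ws j) by have [] := Hws j.
have /choice [L HL] : forall j, exists ab : ('rV[int]_m -> R) * ('rV[int]_m -> R),
    forall k, fourier_re mu (ws j) k = ab.1 k *: Rstar_k Rm k /\
              fourier_im mu (ws j) k = ab.2 k *: Rstar_k Rm k.
  by move=> j; have [_ [la [lb [_ _ H]]]] := Hws j; exists (la, lb).
have key : forall k, exists ab : R * R,
    (fourier_re mu w k = ab.1 *: Rstar_k Rm k /\
     fourier_im mu w k = ab.2 *: Rstar_k Rm k) /\
    (Rstar_k Rm k = 0 -> ab.1 = 0 /\ ab.2 = 0).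
  move=> k.
  have C1 : forall c, (fun j => (L j).1 k * Rstar_k Rm k ord0 c) @ \oo -->
      fourier_re mu w k ord0 c.
    move=> c.
    have := @conv_fourier R m n mu p p1 Hmu ws w _ c hw hws (@measurable_cosk R m k)
      (@cos_b R m k) Hd.
    move=> H; rewrite fre_E.
    suff -> : (fun j => (L j).1 k * Rstar_k Rm k ord0 c) = (fun j =>
       Rintegral mu (@Ycell R m) (fun y => ws j y ord0 c * cos (2 * pi * kdot k y))).
      exact: H.
    by apply/funext => j; rewrite -fre_E (HL j k).1 [RHS]mxE.
  have [l1 [e1 z1]] := @line_limit R n (fun j => (L j).1 k) (Rstar_k Rm k)
      (fourier_re mu w k) C1.
  have C2 : forall c, (fun j => (L j).2 k * Rstar_k Rm k ord0 c) @ \oo -->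
      fourier_im mu w k ord0 c.
    move=> c.
    have := cvgN (@conv_fourier R m n mu p p1 Hmu ws w _ c hw hws (@measurable_sink R m k)
      (@sin_b R m k) Hd).
    move=> H; rewrite fim_E.
    suff -> : (fun j => (L j).2 k * Rstar_k Rm k ord0 c) = (fun j =>
       - Rintegral mu (@Ycell R m) (fun y => ws j y ord0 c * sin (2 * pi * kdot k y))).
      exact: H.
    by apply/funext => j; rewrite -fim_E (HL j k).2 [RHS]mxE.
  have [l2 [e2 z2]] := @line_limit R n (fun j => (L j).2 k) (Rstar_k Rm k)
      (fourier_im mu w k) C2.
  by exists (l1, l2); split => // /[dup] /z1 -> /z2 ->.
have /choice [AB HAB] := key.
split => //.
exists (fun k => (AB k).1), (fun k => (AB k).2); split.
- by have [_ /(_ (@Rstar0 R m n Rm)) []] := HAB 0.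
- by have [_ /(_ (@Rstar0 R m n Rm)) []] := HAB 0.
- by move=> k; have [] := HAB k.
Qed.
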